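(* Assume Assumption (S). Let $U$ be a sufficiently smooth solution of $U_t+\beta U_x=0$ on $\Omega$ with periodic boundary conditions, $U^n=U(\cdot,n\tau)$, and define reference functions $U^{n,0}=U^n$, $U^{n,\ell+1}=\sum_{0\le\kappa\le\ell}(c_{\ell\kappa}U^{n,\kappa}-\tau d_{\ell\kappa}\beta U^{n,\kappa}_x)$ for $\ell=0,\dots,s-2$, and $U^{n,s}=U^{n+1}$. Define $\rho^{n,\ell+1}=0$ for $\ell<s-1$ and $\rho^{n,s}=\frac1\tau\big(U^{n+1}-\sum_{0\le\kappa\le s-1}(c_{s-1,\kappa}U^{n,\kappa}-\tau d_{s-1,\kappa}\beta U^{n,\kappa}_x)\big)$. Then for all $\omega\in\mathbb V^k$ and $\ell=0,\dots,s-1$, $$(U^{n,\ell+1},M^*\omega)=\sum_{0\le\kappa\le\ell}\big(c_{\ell\kappa}(U^{n,\kappa},M^*\omega)+\tau d_{\ell\kappa}\mathcal H^*(U^{n,\kappa},\omega)\big)+\tau(\rho^{n,\ell+1},M^*\omega).$$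
   Context: Let $\Omega=[a,b]$ be partitioned into finitely many cells $I_i=[x_{i-\frac12},x_{i+\frac12}]$ with sizes $h_i$; indices periodic. $(\cdot,\cdot)$: $L^2(\Omega)$ inner product; $(\cdot,\cdot)_{I_i}$: $L^2(I_i)$ inner product. $\mathbb V^k=\{v\in L^2(\Omega): v|_{I_i}\in\mathbb P^k(I_i)\ \forall i\}$. Each $I_i$ has subdivision points $x_{i-\frac12}=x_{i,0}<x_{i,1}<\dots<x_{i,k}<x_{i,k+1}=x_{i+\frac12}$, control volumes $I_{i,j}=[x_{i,j},x_{i,j+1}]$; $\mathbb V^{k,*}$ = functions constant on each $I_{i,j}$. Quadrature on $I_i$: $Q_i^k(v)=\sum_{j=0}^{k+1}A_{i,j}v(x_{i,j})$ (applied to restrictions to $I_i$, endpoint values from inside), error $R_i^k(v)=\int_{I_i}v\,dx-Q_i^k(v)$, exact on $\mathbb P^{k-1}(I_i)$. $M^*:\mathbb V^k\to\mathbb V^{k,*}$: for $v=\omega|_{I_i}$, $(M^*\omega)|_{I_{i,0}}=v(x_{i-\frac12})+A_{i,0}v'(x_{i-\frac12})$, $(M^*\omega)|_{I_{i,j}}-(M^*\omega)|_{I_{i,j-1}}=A_{i,j}v'(x_{i,j})$, $j=1,\dots,k$. $L_{i,\ell}$: shifted Legendre polynomial of degree $\ell$ on $I_i$, $L_{i,\ell}(x_{i+\frac12})=1$, $(L_{i,\ell},L_{i,m})_{I_i}=\delta_{\ell m}h_i/(2\ell+1)$. Assumption (S): $k\ge1$ and for every $i$, $R_i^k$ vanishes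 on $\mathbb P^{2k-1}(I_i)$ and $\frac{h_i}{2k-1}-Q_i^k(L_{i,k+1}L_{i,k-1})>0$. Jumps $[\![v]\!]_{i+\frac12}=v(x_{i+\frac12}^+)-v(x_{i+\frac12}^-)$. For $\omega\in\mathbb V^k$ and $v$ piecewise smooth (in particular continuous $v$): $\mathcal H^*(v,\omega)=\beta\big(\sum_iQ_i^k(v\omega_x)+\sum_iv(x_{i+\frac12}^-)[\![\omega]\!]_{i+\frac12}-\sum_iA_{i,0}\omega_x(x_{i-\frac12}^+)[\![v]\!]_{i-\frac12}\big)$, $\beta>0$ constant. $c_{\ell\kappa},d_{\ell\kappa}$ ($0\le\kappa\le\ell\le s-1$, $\sum_\kappa c_{\ell\kappa}=1$) are explicit $s$-stage Runge–Kutta coefficients, $\tau>0$ the time step. *)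

(* Defs.v *)
From Stdlib Require Import Reals Lra Lia Arith List.
From Coquelicot Require Import Coquelicot.
Import ListNotations.
Open Scope R_scope.

Definition sumR (n : nat) (f : nat -> R) : R :=
  fold_right Rplus 0 (map f (seq 0 n)).

Definition binomR (n m : nat) : R :=
  INR (fact n) / (INR (fact m) * INR (fact (n - m))).

Definition is_poly (p : R -> R) (d : nat) : Prop :=
  exists cf : nat -> R, forall x, p x = sumR (S d) (fun m => cf m * x ^ m).

(* Mesh: N cells, I_i = [node i, node (i+1)], i = 0..N-1;
   x_{i-1/2} = node i; subdivision points x_{i,j} = sub i j, j=0..k+1. *)
Definition mesh_ok (a b : R) (N k : nat) (node : nat -> R) (sub : nat -> nat -> R) : Prop :=
  (0 < N)%nat /\ node O = a /\ node N = b /\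
  forall i, (i < N)%nat ->
    sub i O = node i /\ sub i (S k) = node (S i) /\
    forall j, (j <= k)%nat -> sub i j < sub i (S j).

Definition hcell (node : nat -> R) (i : nat) : R := node (S i) - node i.

Definition nextc (N i : nat) : nat := Nat.modulo (S i) N.
Definition prevc (N i : nat) : nat := Nat.modulo (i + N - 1) N.

Definition Quad (k : nat) (sub A : nat -> nat -> R) (i : nat) (v : R -> R) : R :=
  sumR (S (S k)) (fun j => A i j * v (sub i j)).

(* shifted Legendre polynomial L_{i,l} on I_i, L_{i,l}(x_{i+1/2}) = 1,
   (L_{i,l},L_{i,m})_{I_i} = delta h_i/(2l+1)  (explicit classical formula) *)
Definition Lleg (node : nat -> R) (i l : nat) (x : R) : R :=
  sumR (S l) (fun m => binomR l m * binomR (l + m) m *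
                      ((x - node (S i)) / hcell node i) ^ m).

Definition AssumptionS (N k : nat) (node : nat -> R) (sub A : nat -> nat -> R) : Prop :=
  (1 <= k)%nat /\
  forall i, (i < N)%nat ->
    (forall p, is_poly p (2 * k - 1) ->
       RInt p (node i) (node (S i)) - Quad k sub A i p = 0) /\
    hcell node i / INR (2 * k - 1)
      - Quad k sub A i (fun x => Lleg node i (k + 1) x * Lleg node i (k - 1) x) > 0.

(* M^* omega : value on control volume I_{i,j}, j = 0..k; w = omega|_{I_i} *)
Fixpoint Mstar (node : nat -> R) (sub A : nat -> nat -> R) (w : R -> R) (i j : nat) : R :=
  match j with
  | O => w (node i) + A i O * Derive w (node i)
  | S j' => Mstar node sub A w i j' + A i j * Derive w (sub i j)
  end.

(* L^2(Omega) inner product (v, W) of a function v with W in V^{k,*},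
   W given by its constant values W i j on the control volumes I_{i,j}. *)
Definition ipstar (N k : nat) (sub : nat -> nat -> R) (v : R -> R)
  (W : nat -> nat -> R) : R :=
  sumR N (fun i => sumR (S k) (fun j => W i j * RInt v (sub i j) (sub i (S j)))).

(* jump [[f]]_{i+1/2} of a piecewise function given cellwise by f i *)
Definition jump (N : nat) (node : nat -> R) (f : nat -> R -> R) (i : nat) : R :=
  f (nextc N i) (node (nextc N i)) - f i (node (S i)).

(* H^*(v, omega), v and omega given cellwise (v i = v|_{I_i}, omega i = omega|_{I_i}) *)
Definition Hstar (N k : nat) (node : nat -> R) (sub A : nat -> nat -> R) (beta : R)
  (v omega : nat -> R -> R) : R :=
  beta * ( sumR N (fun i => Quad k sub A i (fun x => v i x * Derive (omega i) x))
         + sumR N (fun i => v i (node (S i)) * jump N node omega i)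
         - sumR N (fun i => A i O * Derive (omega i) (node i)
                             * jump N node v (prevc N i)) ).

Definition rk_step (c d : nat -> nat -> R) (tau beta : R) (F : nat -> R -> R) (l : nat)
  : R -> R :=
  fun x => sumR (S l) (fun kap => c l kap * F kap x - tau * d l kap * beta * Derive (F kap) x).

(* stages m kap = U^{n,kap} for kap <= m, built from U0 = U^n *)
Fixpoint stages (c d : nat -> nat -> R) (tau beta : R) (U0 : R -> R) (m : nat)
  : nat -> R -> R :=
  match m with
  | O => fun _ => U0
  | S m' => let F := stages c d tau beta U0 m' in
            fun kap => if Nat.leb kap m' then F kap else rk_step c d tau beta F m'
  end.

Definition Uref (s : nat) (c d : nat -> nat -> R) (tau beta : R) (U0 U1 : R -> R)
  (kap : nat) : R -> R :=
  if Nat.eqb kap s then U1 else stages c d tau beta U0 kap kap.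

Definition rho (s : nat) (c d : nat -> nat -> R) (tau beta : R) (U0 U1 : R -> R)
  (l1 : nat) : R -> R :=
  if Nat.eqb l1 s then
    fun x => / tau * (U1 x - rk_step c d tau beta (Uref s c d tau beta U0 U1) (s - 1) x)
  else fun _ => 0.

(* Main.v *)
Require Import Defs.
From Stdlib Require Import Reals Lra Lia Arith List FunctionalExtensionality.
From Coquelicot Require Import Coquelicot.
Import ListNotations.
Open Scope R_scope.

Lemma sumR_0 f : sumR 0 f = 0.
Proof. reflexivity. Qed.

Lemma sumR_S n f : sumR (S n) f = sumR n f + f n.
Proof.
  unfold sumR. rewrite seq_S, map_app, fold_right_app. simpl.
  generalize (map f (seq 0 n)). intros l. induction l; simpl; lra.
Qed.

Lemma sumR_shift n f : sumR (S n) f = f 0%nat + sumR n (fun i => f (S i)).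
Proof.
  unfold sumR. simpl. f_equal. rewrite <- seq_shift, map_map. reflexivity.
Qed.

Lemma sumR_ext n f g : (forall i, (i < n)%nat -> f i = g i) -> sumR n f = sumR n g.
Proof.
  induction n; intros H; [reflexivity|]. rewrite !sumR_S. rewrite IHn by (intros; apply H; lia).
  rewrite H by lia. reflexivity.
Qed.

Lemma sumR_plus n f g : sumR n (fun i => f i + g i) = sumR n f + sumR n g.
Proof. induction n; [rewrite ?sumR_0; lra|]. rewrite !sumR_S, IHn; cbv beta; lra. Qed.

Lemma sumR_minus n f g : sumR n (fun i => f i - g i) = sumR n f - sumR n g.
Proof. induction n; [rewrite ?sumR_0; lra|]. rewrite !sumR_S, IHn; cbv beta; lra. Qed.

Lemma sumR_scal n a f : sumR n (fun i => a * f i) = a * sumR n f.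
Proof. induction n; [rewrite ?sumR_0; lra|]. rewrite !sumR_S, IHn; cbv beta; lra. Qed.

Lemma sumR_zero n : sumR n (fun _ => 0) = 0.
Proof. induction n; [rewrite ?sumR_0; lra|]. rewrite !sumR_S, IHn; cbv beta; lra. Qed.

Lemma sumR_pad n p g :
  sumR (n + p) (fun m => if Nat.ltb m n then g m else 0) = sumR n g.
Proof.
  induction p.
  - rewrite Nat.add_0_r. apply sumR_ext. intros i Hi.
    destruct (Nat.ltb_spec i n); [reflexivity | lia].
  - rewrite Nat.add_succ_r, sumR_S, IHp. destruct (Nat.ltb_spec (n+p) n); [lia|lra].
Qed.

Lemma poly_is_derive n cf x :
  is_derive (fun y => sumR n (fun m => cf m * y ^ m)) x
            (sumR n (fun m => cf m * (INR m * x ^ pred m))).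
Proof.
  induction n.
  - apply is_derive_ext with (f := fun _ => 0). { intros; reflexivity. }
    apply (is_derive_const (V:=R_NormedModule)).
  - apply is_derive_ext with (f := fun y => sumR n (fun m => cf m * y ^ m) + cf n * y ^ n).
    { intros; rewrite sumR_S; reflexivity. }
    rewrite sumR_S. apply (is_derive_plus (K:=R_AbsRing) (V:=R_NormedModule)); [exact IHn|].
    apply is_derive_scal.
    pose proof (is_derive_pow (fun y => y) n x 1 (is_derive_id (K:=R_AbsRing) x)) as H.
    replace (INR n * x ^ pred n) with (INR n * 1 * x ^ pred n) by ring. exact H.
Qed.

Lemma poly_exd q d : is_poly q d -> forall x, ex_derive q x.
Proof.
  intros [cf Hcf] x. exists (sumR (S d) (fun m => cf m * (INR m * x ^ pred m))).
  eapply is_derive_ext; [|apply poly_is_derive]. intros t; simpl. symmetry; apply Hcf.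
Qed.

Lemma poly_cont q d : is_poly q d -> forall x, continuous q x.
Proof. intros H x. apply (ex_derive_continuous (K:=R_AbsRing) (V:=R_NormedModule)). eapply poly_exd; eauto. Qed.

Lemma poly_facts p k : (1 <= k)%nat -> is_poly p k ->
  (forall x, ex_derive p x) /\ is_poly (Derive p) (2 * k - 1) /\
  (forall x, continuous (Derive p) x).
Proof.
  intros Hk Hp. assert (Hd : is_poly (Derive p) (2 * k - 1)).
  { destruct Hp as [cf Hcf].
    exists (fun m => if Nat.ltb m k then cf (S m) * INR (S m) else 0). intros x.
    rewrite (is_derive_unique p x (sumR (S k) (fun m => cf m * (INR m * x ^ pred m)))).
    2:{ eapply is_derive_ext; [|apply poly_is_derive]. intros t; simpl. symmetry; apply Hcf. }
    rewrite sumR_shift. replace (S (2 * k - 1)) with (k + k)%nat by lia.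
    transitivity (sumR k (fun m => cf (S m) * INR (S m) * x ^ m)).
    { simpl INR at 1. rewrite Rmult_0_l, Rmult_0_r, Rplus_0_l.
      apply sumR_ext. intros i Hi. simpl pred. ring. }
    rewrite <- (sumR_pad k k).
    apply sumR_ext. intros i Hi. destruct (Nat.ltb i k); ring. }
  split; [eapply poly_exd; eauto|]. split; [exact Hd|]. eapply poly_cont; eauto.
Qed.

Definition smooth (f : R -> R) := forall m x, ex_derive (Derive_n f m) x.
Definition good (p : R) (f : R -> R) := smooth f /\ forall x, f (x + p) = f x.

Lemma good_ext p f g : (forall x, f x = g x) -> good p f -> good p g.
Proof.
  intros E [Hs Hp]. split.
  - intros m x. eapply ex_derive_ext; [|apply (Hs m x)]. intros t. apply Derive_n_ext. exact E.
  - intros x. rewrite <- !E. apply Hp.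
Qed.

Lemma good_exd p f x : good p f -> ex_derive f x.
Proof. intros [Hs _]. exact (Hs O x). Qed.

Lemma good_cont p f x : good p f -> continuous f x.
Proof. intros H. apply (ex_derive_continuous (K:=R_AbsRing) (V:=R_NormedModule)). eapply good_exd; eauto. Qed.

Lemma good_Dcont p f x : good p f -> continuous (Derive f) x.
Proof. intros [Hs _]. apply (ex_derive_continuous (K:=R_AbsRing) (V:=R_NormedModule)). exact (Hs 1%nat x). Qed.

Lemma good_plus p f g : good p f -> good p g -> good p (fun x => f x + g x).
Proof.
  intros [Hf Pf] [Hg Pg]. split.
  - intros m x. eapply ex_derive_ext.
    { intros t. symmetry. apply Derive_n_plus; apply filter_forall; intros y k Hk;
      destruct k; simpl; auto. }
    apply (ex_derive_plus (K:=R_AbsRing) (V:=R_NormedModule)); auto.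
  - intros x. rewrite Pf, Pg. reflexivity.
Qed.

Lemma good_scal p a f : good p f -> good p (fun x => a * f x).
Proof.
  intros [Hf Pf]. split.
  - intros m x. eapply ex_derive_ext.
    { intros t. symmetry. apply Derive_n_scal_l. }
    apply ex_derive_scal; auto.
  - intros x. rewrite Pf. reflexivity.
Qed.

Lemma Dn_zero m t : Derive_n (fun _ => 0) m t = 0.
Proof. revert t; induction m; intros t; [reflexivity|]. simpl.
  rewrite (Derive_ext _ (fun _ => 0)) by (intros; apply IHm). apply Derive_const. Qed.

Lemma good_zero p : good p (fun _ => 0).
Proof.
  split.
  - intros m x. apply ex_derive_ext with (f := fun _ => 0).
    { intros t. symmetry. apply Dn_zero. }
    apply ex_derive_const.
  - reflexivity.
Qed.

Lemma good_Derive p f : good p f -> good p (Derive f).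
Proof.
  intros [Hf Pf].
  assert (E : forall m x, Derive_n (Derive f) m x = Derive_n f (S m) x).
  { induction m; intros x; [reflexivity|]. simpl. apply Derive_ext. exact IHm. }
  split.
  - intros m x. eapply ex_derive_ext; [|apply (Hf (S m) x)]. intros t; symmetry; apply E.
  - intros x.
    assert (H1 : Derive (fun y => f (y + p)) x = Derive (fun y => y + p) x * Derive f (x + p)).
    { apply (Derive_comp f (fun y => y + p) x). exact (Hf O (x + p)). apply (ex_derive_plus (K:=R_AbsRing) (V:=R_NormedModule) (fun y => y) (fun _ => p)). apply ex_derive_id. apply ex_derive_const. }
    assert (H2 : Derive (fun y => y + p) x = 1).
    { rewrite Derive_plus. rewrite Derive_id, Derive_const. ring.
      apply ex_derive_id. apply ex_derive_const. }
    rewrite H2, Rmult_1_l in H1. rewrite <- H1. apply Derive_ext. exact Pf.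
Qed.

Lemma good_sum p n (h : nat -> R -> R) :
  (forall kap, (kap < n)%nat -> good p (h kap)) -> good p (fun x => sumR n (fun kap => h kap x)).
Proof.
  induction n; intros H.
  - eapply good_ext; [|apply good_zero]. intros; rewrite sumR_0; reflexivity.
  - eapply good_ext; [intros x; rewrite <- sumR_S; reflexivity|].
    apply good_plus; [apply IHn; intros; apply H; lia|apply H; lia].
Qed.

Definition cont (f : R -> R) := forall x, continuous f x.

Lemma cont_scal a f : cont f -> cont (fun x => a * f x).
Proof.
  intros Hf x. apply (continuous_mult (K:=R_AbsRing) (fun _ => a) f); auto. apply continuous_const.
Qed.

Lemma cont_plus f g : cont f -> cont g -> cont (fun x => f x + g x).
Proof. intros Hf Hg x. apply (continuous_plus (V:=R_NormedModule) f g); auto. Qed.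

Lemma cont_lin a b f g : cont f -> cont g -> cont (fun x => a * f x + b * g x).
Proof. intros. apply (cont_plus (fun x => a * f x) (fun x => b * g x)); apply cont_scal; auto. Qed.

Lemma RInt_lin a b f g u v : cont f -> cont g ->
  RInt (fun x => a * f x + b * g x) u v = a * RInt f u v + b * RInt g u v.
Proof.
  intros Hf Hg.
  assert (E1 : forall h, cont h -> ex_RInt h u v).
  { intros h Hh. apply (ex_RInt_continuous (V:=R_CompleteNormedModule)). intros; apply Hh. }
  assert (E2 : forall c h, cont h -> RInt (fun x => c * h x) u v = c * RInt h u v).
  { intros c h Hh. apply (RInt_scal (V:=R_CompleteNormedModule)). apply E1, Hh. }
  rewrite (RInt_plus (V:=R_CompleteNormedModule) (fun x => a * f x) (fun x => b * g x)).
  - simpl. rewrite !E2 by auto. reflexivity.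
  - apply E1. apply cont_scal; auto.
  - apply E1. apply cont_scal; auto.
Qed.

Lemma ip_lin N k sub W a b f g : cont f -> cont g ->
  ipstar N k sub (fun x => a * f x + b * g x) W = a * ipstar N k sub f W + b * ipstar N k sub g W.
Proof.
  intros Hf Hg. unfold ipstar. rewrite <- !sumR_scal, <- sumR_plus. apply sumR_ext; intros i _.
  rewrite <- !sumR_scal, <- sumR_plus. apply sumR_ext; intros j _.
  rewrite RInt_lin by auto. ring.
Qed.

Lemma ip_ext N k sub W f g : (forall x, f x = g x) -> ipstar N k sub f W = ipstar N k sub g W.
Proof. intros E. replace f with g; [reflexivity|]. apply functional_extensionality; intros; auto. Qed.

Lemma cont_sum n (h : nat -> R -> R) :
  (forall kap, (kap < n)%nat -> cont (h kap)) -> cont (fun x => sumR n (fun kap => h kap x)).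
Proof.
  induction n; intros H.
  - intros x. eapply continuous_ext; [|apply (continuous_const (U:=R_UniformSpace) 0)].
    intros; rewrite sumR_0; reflexivity.
  - intros x. eapply continuous_ext; [intros y; rewrite <- sumR_S; reflexivity|].
    apply cont_plus; [apply IHn; intros; apply H; lia|apply H; lia].
Qed.

Lemma ip_sum N k sub W n (h : nat -> R -> R) :
  (forall kap, (kap < n)%nat -> cont (h kap)) ->
  ipstar N k sub (fun x => sumR n (fun kap => h kap x)) W = sumR n (fun kap => ipstar N k sub (h kap) W).
Proof.
  induction n; intros H.
  - rewrite sumR_0. rewrite (ip_ext _ _ _ _ _ (fun x => 0 * (fun _ => 0) x + 0 * (fun _ => 0) x)).
    + rewrite ip_lin. ring. intros x; apply continuous_const. intros x; apply continuous_const.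
    + intros; rewrite sumR_0; ring.
  - rewrite (ip_ext _ _ _ _ _ (fun x => 1 * sumR n (fun kap => h kap x) + 1 * h n x)).
    + rewrite ip_lin, sumR_S, IHn. ring. intros; apply H; lia.
      apply cont_sum; intros; apply H; lia. apply H; lia.
    + intros; rewrite sumR_S; ring.
Qed.

Lemma good_lin2 p a b f g : good p f -> good p g -> good p (fun x => a * f x - b * g x).
Proof.
  intros Hf Hg. eapply good_ext; [|apply (good_plus p (fun x => a * f x) (fun x => (- b) * g x))].
  intros; simpl; ring. apply good_scal; auto. apply good_scal; auto.
Qed.

Lemma stages_le c d tau beta U0 m kap : (kap <= m)%nat ->
  stages c d tau beta U0 m kap = stages c d tau beta U0 kap kap.
Proof.
  induction m; intros H.
  - replace kap with O by lia. reflexivity.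
  - destruct (Nat.eq_dec kap (S m)) as [->|Hne]; [reflexivity|].
    cbn [stages]. destruct (Nat.leb_spec kap m); [apply IHm; lia | lia].
Qed.

Lemma rk_good p c d tau beta (F : nat -> R -> R) l :
  (forall kap, (kap <= l)%nat -> good p (F kap)) -> good p (rk_step c d tau beta F l).
Proof.
  intros H. unfold rk_step. apply (good_sum p (S l) (fun kap x => c l kap * F kap x - tau * d l kap * beta * Derive (F kap) x)).
  intros kap Hk. apply good_lin2. apply H; lia. apply good_Derive, H; lia.
Qed.

Lemma stages_good p c d tau beta U0 : good p U0 ->
  forall m kap, (kap <= m)%nat -> good p (stages c d tau beta U0 m kap).
Proof.
  intros H0. induction m; intros kap Hk.
  - exact H0.
  - cbn [stages]. destruct (Nat.leb_spec kap m).
    + apply IHm; lia.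
    + apply rk_good. intros; apply IHm; lia.
Qed.

Section Cell.
Variables (node : nat -> R) (sub A : nat -> nat -> R) (k i : nat) (w v : R -> R).
Hypothesis Hsub0 : sub i O = node i.

Lemma Mstar_closed m : Mstar node sub A w i m = w (node i) + sumR (S m) (fun j => A i j * Derive w (sub i j)).
Proof.
  induction m.
  - cbn [Mstar]. rewrite sumR_S, sumR_0, Hsub0. ring.
  - cbn [Mstar]. rewrite IHm. rewrite (sumR_S (S m)). ring.
Qed.

Lemma abel m : sumR (S m) (fun j => Mstar node sub A w i j * (v (sub i (S j)) - v (sub i j))) =
  Mstar node sub A w i m * v (sub i (S m)) - w (node i) * v (node i)
  - sumR (S m) (fun j => A i j * Derive w (sub i j) * v (sub i j)).
Proof.
  induction m.
  - rewrite !sumR_S, !sumR_0. cbn [Mstar]. rewrite Hsub0. ring.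
  - rewrite (sumR_S (S m)), IHm, (sumR_S (S m)). cbn [Mstar]. ring.
Qed.

Hypothesis HsubK : sub i (S k) = node (S i).
Hypothesis Hv : forall x, ex_derive v x.
Hypothesis Hvc : forall x, continuous (Derive v) x.
Hypothesis Hw : forall x, ex_derive w x.
Hypothesis Hwc : forall x, continuous (Derive w) x.
Hypothesis Hex : RInt (Derive w) (node i) (node (S i)) - Quad k sub A i (Derive w) = 0.

Lemma cell :
  sumR (S k) (fun j => Mstar node sub A w i j * RInt (Derive v) (sub i j) (sub i (S j))) =
  w (node (S i)) * v (node (S i)) - w (node i) * v (node i) - Quad k sub A i (fun x => v x * Derive w x).
Proof.
  rewrite (sumR_ext _ _ (fun j => Mstar node sub A w i j * (v (sub i (S j)) - v (sub i j)))).
  2:{ intros j _. rewrite RInt_Derive; auto. }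
  rewrite abel, Mstar_closed, HsubK.
  rewrite RInt_Derive in Hex by auto.
  unfold Quad in *. rewrite (sumR_S (S k) (fun j => A i j * Derive w (sub i j))) in Hex.
  rewrite (sumR_S (S k) (fun j => A i j * (v (sub i j) * Derive w (sub i j)))). rewrite HsubK in *.
  set (S0 := sumR (S k) (fun j => A i j * Derive w (sub i j))) in *.
  assert (E : S0 = w (node (S i)) - w (node i) - A i (S k) * Derive w (node (S i))) by lra.
  rewrite E.
  rewrite (sumR_ext (S k) (fun j => A i j * (v (sub i j) * Derive w (sub i j)))
              (fun j => A i j * Derive w (sub i j) * v (sub i j))) by (intros; ring).
  ring.
Qed.
End Cell.

Lemma nextc_lt N j : (S j < N)%nat -> nextc N j = S j.
Proof. intros H. unfold nextc. apply Nat.mod_small; auto. Qed.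

Lemma nextc_last M : nextc (S M) M = O.
Proof. unfold nextc. apply Nat.mod_same. lia. Qed.

Lemma cyclic N f : (0 < N)%nat -> sumR N (fun i => f (nextc N i)) = sumR N f.
Proof.
  intros HN. destruct N as [|M]; [lia|].
  rewrite sumR_S, sumR_shift, nextc_last.
  rewrite (sumR_ext M _ (fun i => f (S i))). ring.
  intros i Hi. rewrite nextc_lt by lia. reflexivity.
Qed.

Lemma key a b N k node sub A beta (omega : nat -> R -> R) v :
  mesh_ok a b N k node sub -> AssumptionS N k node sub A ->
  (forall i, (i < N)%nat -> is_poly (omega i) k) -> good (b - a) v ->
  Hstar N k node sub A beta (fun _ => v) omega =
  - beta * ipstar N k sub (Derive v) (fun i j => Mstar node sub A (omega i) i j).
Proof.
  intros [HN [Ha [Hb Hm]]] [Hk HS] Hom Hv.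
  assert (Hab : v b = v a).
  { destruct Hv as [_ Hp]. rewrite <- (Hp a). f_equal. ring. }
  assert (Hj : forall j, (j < N)%nat -> v (node (nextc N j)) = v (node (S j))).
  { intros j Hj. destruct (Nat.eq_dec (S j) N) as [E|E].
    - subst N. rewrite nextc_last, Ha, Hb. auto.
    - rewrite nextc_lt by lia. reflexivity. }
  unfold ipstar.
  rewrite (sumR_ext N _ (fun i => omega i (node (S i)) * v (node (S i)) - omega i (node i) * v (node i)
                               - Quad k sub A i (fun x => v x * Derive (omega i) x))).
  2:{ intros i Hi. destruct (Hm i Hi) as [H0 [H1 _]].
      destruct (poly_facts (omega i) k Hk (Hom i Hi)) as [Hw [Hd Hwc]].
      apply cell; auto.
      - intros x. eapply good_exd; eauto.
      - intros x. eapply good_Dcont; eauto.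
      - apply (proj1 (HS i Hi)). exact Hd. }
  unfold Hstar.
  rewrite (sumR_ext N (fun i => A i O * Derive (omega i) (node i) * jump N node (fun _ => v) (prevc N i))
                      (fun _ => 0)).
  2:{ intros i Hi. unfold jump. rewrite Hj. ring. unfold prevc. apply Nat.mod_upper_bound. lia. }
  rewrite sumR_zero.
  rewrite (sumR_ext N (fun i => v (node (S i)) * jump N node omega i)
            (fun i => (fun j => omega j (node j) * v (node j)) (nextc N i)
                      - omega i (node (S i)) * v (node (S i)))).
  2:{ intros i Hi. unfold jump. rewrite <- (Hj i Hi). ring. }
  rewrite sumR_minus, (cyclic N (fun j => omega j (node j) * v (node j))) by auto. rewrite !sumR_minus. ring.
Qed.
Theorem proposition4p16
  (a b : R) (N k : nat) (node : nat -> R) (sub A : nat -> nat -> R)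
  (beta : R) (s : nat) (c d : nat -> nat -> R) (tau : R)
  (U : R -> R -> R) (n : nat) :
  a < b ->
  mesh_ok a b N k node sub ->
  AssumptionS N k node sub A ->
  0 < beta ->
  (1 <= s)%nat ->
  (forall l, (l < s)%nat -> sumR (S l) (c l) = 1) ->
  0 < tau ->
  (* U sufficiently smooth in x *)
  (forall t m x, ex_derive (Derive_n (fun y => U y t) m) x) ->
  (* periodic boundary conditions on Omega = [a,b] *)
  (forall x t, U (x + (b - a)) t = U x t) ->
  (* U_t + beta U_x = 0 *)
  (forall x t, is_derive (fun t' => U x t') t (- beta * Derive (fun y => U y t) x)) ->
  let Un := fun x => U x (INR n * tau) in
  let Un1 := fun x => U x (INR (S n) * tau) in
  forall omega : nat -> R -> R,
  (forall i, (i < N)%nat -> is_poly (omega i) k) ->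
  forall l, (l < s)%nat ->
  let Ms := fun i j => Mstar node sub A (omega i) i j in
  let Ur := Uref s c d tau beta Un Un1 in
  ipstar N k sub (Ur (S l)) Ms =
    sumR (S l) (fun kap =>
      c l kap * ipstar N k sub (Ur kap) Ms
      + tau * d l kap * Hstar N k node sub A beta (fun _ => Ur kap) omega)
    + tau * ipstar N k sub (rho s c d tau beta Un Un1 (S l)) Ms.
Proof.
  intros Hab Hmesh HS Hbeta Hs Hc Htau Hsm Hper Hpde Un Un1 omega Hom l Hl Ms Ur.
  assert (GUn : good (b - a) Un).
  { split. intros m x. exact (Hsm (INR n * tau) m x). intros x. apply Hper. }
  assert (GUn1 : good (b - a) Un1).
  { split. intros m x. exact (Hsm (INR (S n) * tau) m x). intros x. apply Hper. }
  assert (GUr : forall kap, (kap < s)%nat -> good (b - a) (Ur kap)).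
  { intros kap Hk. unfold Ur, Uref. destruct (Nat.eqb_spec kap s); [lia|].
    apply stages_good; [exact GUn|lia]. }
  set (rh := rho s c d tau beta Un Un1 (S l)).
  assert (Grk : good (b - a) (rk_step c d tau beta Ur (s - 1))).
  { apply rk_good. intros; apply GUr; lia. }
  assert (Grh : good (b - a) rh).
  { unfold rh, rho. destruct (Nat.eqb_spec (S l) s); [|apply good_zero].
    pose proof (good_scal _ (/ tau) _ (good_lin2 _ 1 1 _ _ GUn1 Grk)) as G.
    eapply good_ext; [|exact G]. intros x. cbv beta. rewrite !Rmult_1_l. reflexivity. }
  assert (Dec : forall x, Ur (S l) x =
     1 * sumR (S l) (fun kap => c l kap * Ur kap x - tau * d l kap * beta * Derive (Ur kap) x)
     + tau * rh x).
  { intros x. destruct (Nat.eqb_spec (S l) s) as [E|E].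
    - assert (U1e : Ur (S l) = Un1) by (unfold Ur, Uref; rewrite E, Nat.eqb_refl; reflexivity).
      rewrite U1e. unfold rh, rho. change (Uref s c d tau beta Un Un1) with Ur.
      replace (S l =? s)%nat with true by (symmetry; apply Nat.eqb_eq; exact E).
      replace (s - 1)%nat with l by lia.
      unfold rk_step. field. lra.
    - assert (R0 : rh x = 0).
      { unfold rh, rho. replace (S l =? s)%nat with false by (symmetry; apply Nat.eqb_neq; exact E). reflexivity. }
      rewrite R0. unfold Ur at 1, Uref.
      replace (S l =? s)%nat with false by (symmetry; apply Nat.eqb_neq; exact E).
      cbn [stages]. replace (S l <=? l)%nat with false by (symmetry; apply Nat.leb_gt; lia).
      unfold rk_step. rewrite Rmult_0_r, Rplus_0_r, Rmult_1_l.
      apply sumR_ext. intros kap Hk. rewrite stages_le by lia.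
      unfold Ur, Uref. destruct (Nat.eqb_spec kap s); [lia|]. reflexivity. }
  rewrite (ip_ext _ _ _ _ _ _ Dec).
  rewrite ip_lin.
  2:{ apply cont_sum. intros kap Hk x. apply (good_cont (b - a)).
      apply good_lin2. apply GUr; lia. apply good_Derive, GUr; lia. }
  2:{ intros x. apply (good_cont (b - a)); auto. }
  rewrite ip_sum.
  2:{ intros kap Hk x. apply (good_cont (b - a)).
      apply good_lin2. apply GUr; lia. apply good_Derive, GUr; lia. }
  rewrite Rmult_1_l. f_equal. apply sumR_ext. intros kap Hk.
  rewrite (ip_ext _ _ _ _ _ (fun x => c l kap * Ur kap x + (- (tau * d l kap * beta)) * Derive (Ur kap) x))
    by (intros; ring).
  rewrite ip_lin.
  2:{ intros x. apply (good_cont (b - a)). apply GUr; lia. }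
  2:{ intros x. apply (good_Dcont (b - a)). apply GUr; lia. }
  rewrite (key a b N k node sub A beta omega (Ur kap)); auto.
  2:{ apply GUr; lia. }
  unfold Ms. ring.
Qed.
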